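(* Fix a history $h_t$ and let $(\hat{Y}_t, O, Z)$ be jointly distributed given $h_t$, with $\hat Y_t\in\mathcal V$ (finite), $O\in\{0,1\}$, $Z$ in a countable set. Assume (outcome-sufficiency) $Z$ is conditionally independent of $\hat{Y}_t$ given $(O, h_t)$, and let $z$ be a feedback value that is positively informative for success: $q_1(z,h_t) > q_0(z,h_t)$. Then for any two candidates $\hat{y}_t, \hat{y}'_t\in\mathcal V$ with positive probability given $h_t$ and with $p(\hat y_t;h_t),p(\hat y'_t;h_t)>0$, \[ r_t^{\mathrm{cf}}(\hat{y}_t; h_t) \ge r_t^{\mathrm{cf}}(\hat{y}'_t; h_t) \iff r_t^{z}(\hat{y}_t; h_t) \ge r_t^{z}(\hat{y}'_t; h_t). \]
   Context: Notation: $p(\hat{y}_t; h_t) := P(O = 1 \mid \hat{Y}_t = \hat{y}_t, h_t)$; $q_b(z, h_t) := P(Z = z \mid O = b, h_t)$ for $b\in\{0,1\}$ (assume $P(O=b\mid h_t)>0$). Interventional credit (in identified form): $r_t^{\mathrm{cf}}(\hat{y}_t; h_t) := \log P(O=1 \mid \hat{Y}_t=\hat{y}_t, h_t) - \log P(O=1\mid h_t)$; this equals the interventional quantity $\log P(O=1\mid \mathrm{do}(\hat Y_t=\hat y_t),h_t) - \log P(O=1\mid h_t)$ under consistency, sequential ignorability and positivity. Feedback-conditioned reward: $r_t^{z}(\hat{y}_t; h_t) := \log P(Z=z \mid \hat{Y}_t=\hat{y}_t, h_t) - \log P(Z=z\mid h_t)$ (which coincides with the self-distillation reward under posterior compatibility).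 Assume $P(Z=z\mid h_t)>0$ and $P(O=1\mid h_t)>0$. *)

(* Defs.v *)
From HB Require Import structures.
From mathcomp Require Import all_boot all_order all_algebra.
From mathcomp Require Import all_classical all_reals.
From mathcomp Require Import ereal esum exp.
Set Implicit Arguments. Unset Strict Implicit. Unset Printing Implicit Defensive.
Import Order.TTheory GRing.Theory Num.Theory.
Local Open Scope ring_scope.

(* Everything is conditional on a fixed history h_t, so we model directly the
   conditional joint distribution of (Yhat_t, O, Z) given h_t, as a probability
   mass function  pm y o z = P(Yhat=y, O=o, Z=z | h_t)  on V x bool x Z,
   V finite, Z countable. O = 1 is encoded as [true]. *)

Section Dist.
Variables (R : realType) (V : finType) (Z : countType).
Variable pm : V -> bool -> Z -> R.

Definition is_pmf : Prop :=
  (forall y o z, 0 <= pm y o z) /\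
  (\sum_(y : V) \sum_(o : bool)
       (\esum_(z in [set: Z]) (pm y o z)%:E))%E = 1%E.

Definition P_YO (y : V) (o : bool) : R :=
  fine (\esum_(z in [set: Z]) (pm y o z)%:E)%E.
Definition P_Y (y : V) : R := \sum_(o : bool) P_YO y o.
Definition P_O (o : bool) : R := \sum_(y : V) P_YO y o.
Definition P_OZ (o : bool) (z : Z) : R := \sum_(y : V) pm y o z.
Definition P_YZ (y : V) (z : Z) : R := \sum_(o : bool) pm y o z.
Definition P_Z (z : Z) : R := \sum_(y : V) \sum_(o : bool) pm y o z.

Definition p_succ (y : V) : R := P_YO y true / P_Y y.
Definition q (b : bool) (z : Z) : R := P_OZ b z / P_O b.

Definition outcome_sufficient : Prop :=
  forall (o : bool) (y : V) (z : Z), 0 < P_O o ->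
    pm y o z / P_O o = (P_YO y o / P_O o) * (P_OZ o z / P_O o).

(* interventional credit (identified form) *)
Definition r_cf (y : V) : R := ln (p_succ y) - ln (P_O true).
Definition r_z (z : Z) (y : V) : R := ln (P_YZ y z / P_Y y) - ln (P_Z z).

End Dist.

(* Main.v *)
Require Import Defs.
From HB Require Import structures.
From mathcomp Require Import all_boot all_order all_algebra.
From mathcomp Require Import all_classical all_reals.
From mathcomp Require Import ereal esum exp.
From mathcomp Require Import ring lra.
Import Order.TTheory GRing.Theory Num.Theory.
Local Open Scope ring_scope.

Theorem proposition2 (R : realType) (V : finType) (Z : countType)
    (pm : V -> bool -> Z -> R) (z : Z) (y y' : V) :
  is_pmf pm ->
  0 < P_O pm true -> 0 < P_O pm false ->
  0 < P_Z pm z ->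
  outcome_sufficient pm ->
  q pm false z < q pm true z ->
  0 < P_Y pm y -> 0 < P_Y pm y' ->
  0 < p_succ pm y -> 0 < p_succ pm y' ->
  (r_cf pm y' <= r_cf pm y <-> r_z pm z y' <= r_z pm z y).
Proof.
move=> [pm0 _] PO1 PO0 PZ OS qlt PY PY' ps ps'.
set q0 := q pm false z; set q1 := q pm true z.
have q0ge : 0 <= q0.
  rewrite /q0 /q divr_ge0 ?(ltW PO0) //.
  by rewrite /P_OZ sumr_ge0.
have pmE : forall w o, pm w o z = P_YO pm w o * q pm o z.
  move=> w o.
  have PO : 0 < P_O pm o by case: o.
  have := OS o w z PO => H.
  have Hne : P_O pm o != 0 by rewrite gt_eqF.
  have -> : pm w o z = pm w o z / P_O pm o * P_O pm o by field.
  rewrite H /q; field; exact Hne.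
have key : forall w, 0 < P_Y pm w ->
    P_YZ pm w z / P_Y pm w = q0 + p_succ pm w * (q1 - q0).
  move=> w Pw.
  have Hne : P_Y pm w != 0 by rewrite gt_eqF.
  rewrite /P_YZ /p_succ big_bool /= !pmE.
  have : P_Y pm w = P_YO pm w true + P_YO pm w false by rewrite /P_Y big_bool.
  move=> E.
  have EF : P_YO pm w false = P_Y pm w - P_YO pm w true by rewrite E; ring.
  rewrite EF /q0 /q1; field; exact Hne.
have pos : forall w, 0 < p_succ pm w -> 0 < q0 + p_succ pm w * (q1 - q0).
  move=> w pw; have : 0 < q1 - q0 by rewrite subr_gt0.
  move=> d; have := mulr_gt0 pw d; lra.
rewrite /r_cf /r_z (key _ PY) (key _ PY').
rewrite lerD2r lerD2r !ler_ln ?posrE ?pos //.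
rewrite lerD2l ler_pM2r ?subr_gt0 //.
Qed.
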